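(* Let $k\ge 2$ and $n_1,\dots,n_k\ge 1$, let $n=n_1+\cdots+n_k$, and let $\Gamma=K_{1,k-1}[K_{n_1},K_{n_2},\dots,K_{n_k}]$, where $K_{n_1}$ replaces the center of the star $K_{1,k-1}$ and $K_{n_2},\dots,K_{n_k}$ replace its leaves. Put $d_1=n-1$ and $d_i=n_1+n_i-1$ for $2\le i\le k$. Then \[\chi(S(\Gamma),x)=\prod_{i=1}^{k}\left(x+\sqrt{2}d_i\right)^{n_i-1}\left(\prod_{i=1}^{k}\big(x-(n_i-1)\sqrt{2}d_i\big)-\sum_{j=2}^{k}n_1n_j(d_1^2+d_j^2)\prod_{\substack{2\le i\le k\\ i\neq j}}\big(x-(n_i-1)\sqrt{2}d_i\big)\right),\] where $\chi(M,x)=\det(xI-M)$ and $S(\Gamma)$ is the Sombor matrix of $\Gamma$.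
   Context: All graphs are finite, simple and undirected. For a graph $\Gamma$ with vertices $u_1,\dots,u_m$, the Sombor matrix $S(\Gamma)$ is the $m\times m$ matrix whose $(i,j)$ entry is $\sqrt{\deg(u_i)^2+\deg(u_j)^2}$ if $u_i$ and $u_j$ are adjacent and $0$ otherwise. $K_r$ is the complete graph on $r$ vertices and $K_{1,k-1}$ is the star with center $u_1$ and leaves $u_2,\dots,u_k$. For a graph $H$ with vertices $u_1,\dots,u_k$ and pairwise disjoint graphs $\Gamma_1,\dots,\Gamma_k$, the generalized join $H[\Gamma_1,\dots,\Gamma_k]$ is obtained by replacing each $u_i$ by $\Gamma_i$ and joining every vertex of $\Gamma_i$ to every vertex of $\Gamma_j$ whenever $u_i$ is adjacent to $u_j$ in $H$. *)

(* Defs.v *)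
From HB Require Import structures.
From mathcomp Require Import all_boot all_order all_algebra.
From mathcomp Require Import reals.
Set Implicit Arguments. Unset Strict Implicit. Unset Printing Implicit Defensive.
Import Order.TTheory GRing.Theory Num.Theory.
Local Open Scope ring_scope.

Definition gdeg (T : finType) (adj : rel T) (x : T) : nat := #|[set y | adj x y]|.

Definition sombor_mx (R : realType) (T : finType) (adj : rel T) : 'M[R]_#|T| :=
  \matrix_(i, j)
    (if adj (enum_val i) (enum_val j)
     then Num.sqrt (((gdeg adj (enum_val i)) ^ 2)%:R + ((gdeg adj (enum_val j)) ^ 2)%:R)
     else 0).

Definition complete_adj (r : nat) : rel 'I_r := fun x y => x != y.

Definition star_adj (k : nat) : rel 'I_k :=
  fun i j => (i != j) && ((val i == 0%N) || (val j == 0%N)).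

(* generalized join H[G_1,...,G_k] : vertices are pairs (i, v) with v a vertex of G_i *)
Definition gjoin_adj (k : nat) (H : rel 'I_k) (T : 'I_k -> finType)
  (G : forall i, rel (T i)) : rel {i : 'I_k & T i} :=
  fun x y => if tag y == tag x then G (tag x) (tagged x) (tagged_as x y)
             else H (tag x) (tag y).

(* Main.v *)
Require Import Defs.
From HB Require Import structures.
From mathcomp Require Import all_boot all_order all_algebra.
From mathcomp Require Import reals.
From mathcomp Require Import zify ring lra.
Import Order.TTheory GRing.Theory Num.Theory.
Local Open Scope ring_scope.


Lemma sylvester (R : comPzRingType) m p (X : 'M[R]_(m, p)) (Y : 'M[R]_(p, m)) :
  \det (1%:M - X *m Y) = \det (1%:M - Y *m X).
Proof.
have e1 : block_mx 1%:M X Y 1%:M =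
   block_mx 1%:M 0 Y 1%:M *m block_mx 1%:M X 0 (1%:M - Y *m X).
  by rewrite mulmx_block !mul1mx !mul0mx !mulmx1 !addr0 addrC subrK.
have e2 : block_mx 1%:M X Y 1%:M =
   block_mx (1%:M - X *m Y) X 0 1%:M *m block_mx 1%:M 0 Y 1%:M.
  by rewrite mulmx_block !mul1mx !mul0mx !mulmx1 !mulmx0 !add0r subrK.
have := congr1 determinant (etrans (esym e1) e2).
rewrite !det_mulmx (det_lblock (1%:M : 'M_m) Y 1%:M) (det_ublock (1%:M : 'M_m) X) (det_ublock _ X (1%:M : 'M_p)) !det1 !mul1r !mulr1; done.
Qed.

Lemma det2 (R : comPzRingType) (A : 'M[R]_2) : \det A = A 0 0 * A 1 1 - A 0 1 * A 1 0.
Proof.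
rewrite (expand_det_row _ 0) !big_ord_recr big_ord0 /= add0r /cofactor !det_mx11 !mxE /=.
rewrite !expr0 expr1 mul1r mulN1r mulrN; congr (_ * _ - _ * _); congr (A _ _); exact: val_inj.
Qed.

Lemma horner_char_poly (R : comNzRingType) m (A : 'M[R]_m) x :
  (char_poly A).[x] = \det (x%:M - A).
Proof.
rewrite /char_poly -[LHS]/(horner_eval x _) -det_map_mx; congr (\det _).
by apply/matrixP => i j; rewrite !mxE /= horner_evalE hornerD hornerN hornerMn hornerX hornerC.
Qed.

Lemma poly_eq_large (R : realDomainType) (p q : {poly R}) (M : R) :
  (forall x, M <= x -> p.[x] = q.[x]) -> p = q.
Proof.
move=> H; apply/eqP; rewrite -subr_eq0; apply/eqP.
apply: (@roots_geq_poly_eq0 _ _ [seq M + i%:R | i <- iota 0 (size (p - q))]).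
- apply/allP => y /mapP [i _ ->]; rewrite /root !hornerE H ?subrr //.
  by rewrite lerDl ler0n.
- rewrite map_inj_uniq ?iota_uniq // => i j /addrI /eqP; rewrite eqr_nat => /eqP.
  done.
- by rewrite size_map size_iota.
Qed.


Lemma big_tag_split (R : Type) (idx : R) (op : Monoid.com_law idx) (I : finType)
  (T_ : I -> finType) (G : {i : I & T_ i} -> R) :
  \big[op/idx]_(p : {i : I & T_ i}) G p =
  \big[op/idx]_(i : I) \big[op/idx]_(w : T_ i) G (Tagged T_ w).
Proof.
rewrite (sig_big_dep xpredT (fun _ => xpredT) (fun i w => G (Tagged T_ w))).
by apply: eq_big => [//|[i w]].
Qed.

Lemma big_enum_split (R : Type) (idx : R) (op : Monoid.com_law idx) (I : finType)
  (T_ : I -> finType) (G : {i : I & T_ i} -> R) :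
  \big[op/idx]_(v < #|{: {i : I & T_ i}}|) G (enum_val v) =
  \big[op/idx]_(i : I) \big[op/idx]_(w : T_ i) G (Tagged T_ w).
Proof.
by rewrite -(big_enum_val (A := {: {i : I & T_ i}})) /= -big_tag_split; apply: eq_bigl.
Qed.

Lemma sum_neq (m : nat) (v0 : 'I_m) : (\sum_(w < m) (v0 != w) = m - 1)%N.
Proof.
rewrite (eq_bigr (fun w => if v0 != w then 1 else 0)%N); last by move=> w _; case: (v0 != w).
rewrite -big_mkcond /= (eq_bigl (mem (predC1 v0))); last by move=> w; rewrite !inE eq_sym.
by rewrite sum1_card cardC1 card_ord subn1.
Qed.

Lemma deg_gjoin k (n : nat -> nat) (hn : forall i, (i < k.+1)%N -> (1 <= n i)%N)
  (y : {i : 'I_k.+1 & 'I_(n i)}) :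
  gdeg (@gjoin_adj k.+1 (@star_adj k.+1) (fun i : 'I_k.+1 => 'I_(n i))
          (fun i => @complete_adj (n i))) y =
  (if val (tag y) == 0%N then (\sum_(i < k.+1) n i) - 1 else n 0%N + n (tag y) - 1)%N.
Proof.
case: y => i0 v0 /=; rewrite /gdeg -sum1_card big_mkcond /= big_tag_split /=.
rewrite (bigD1 i0) //=.
under eq_bigr => w _ do rewrite inE /gjoin_adj /= eqxx tagged_asE /complete_adj.
rewrite sum_neq.
under eq_bigr => j hj do (under eq_bigr => w _ do rewrite inE /gjoin_adj /= (negbTE hj)).
under eq_bigr => j _ do rewrite big_const_ord iter_addn_0.
have hi0 := hn _ (ltn_ord i0).
case: eqP => [h0|h0].
  have -> : i0 = ord0 by apply: val_inj.
  rewrite [in RHS](bigD1 ord0) //=.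
  under eq_bigr => j hj do rewrite /star_adj eq_sym hj /=.
  under eq_bigr => j _ do rewrite mul1n.
  have := hn 0%N isT; lia.
rewrite (bigD1 ord0) /=; last by apply/eqP => h; apply: h0; rewrite -h.
rewrite big1 => [|j /andP[hj hj0]]; last first.
  rewrite /star_adj eq_sym hj /=; have -> : (val i0 == 0%N) = false by apply/eqP.
  by have -> : (val j == 0%N) = false by apply/negP => /eqP h; move/eqP: hj0; apply; apply: val_inj.
rewrite /star_adj.
have -> : (i0 != ord0) = true by apply/eqP => h; apply: h0; rewrite h.
rewrite /= eqxx orbT mul1n; have := hi0; lia.
Qed.


Section DetStruct.
Variables (R : fieldType) (m K : nat) (t : 'I_m -> 'I_K).
Let E : 'M[R]_(m, K) := \matrix_(v, i) (t v == i)%:R.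

Lemma mulE_l p (C : 'M[R]_(K, p)) v j : (E *m C) v j = C (t v) j.
Proof.
rewrite mxE (bigD1 (t v)) //= mxE eqxx mul1r big1 ?addr0 // => i hi.
by rewrite mxE eq_sym (negbTE hi) mul0r.
Qed.

Lemma mulE_r p (C : 'M[R]_(p, K)) i w : (C *m E^T) i w = C i (t w).
Proof.
rewrite mxE (bigD1 (t w)) //= !mxE eqxx mulr1 big1 ?addr0 // => j hj.
by rewrite !mxE eq_sym (negbTE hj) mulr0.
Qed.

Lemma det_struct (y : 'I_K -> R) (B : 'M[R]_K) (A : 'M[R]_m)
  (hy : forall i, y i != 0)
  (hA : forall v w, A v w = (v == w)%:R * y (t v) - B (t v) (t w)) :
  \det A = (\prod_v y (t v)) *
     \det (1%:M - diag_mx (\row_i ((\sum_v (t v == i)%:R) / y i)) *m B).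
Proof.
pose D : 'M[R]_m := diag_mx (\row_v y (t v)).
pose Di : 'M[R]_m := diag_mx (\row_v (y (t v))^-1).
have hX : forall v w, (Di *m E *m B *m E^T) v w = (y (t v))^-1 * B (t v) (t w).
  by move=> v w; rewrite mulE_r -mulmxA mul_diag_mx mxE mulE_l mxE.
have eA : A = D *m (1%:M - (Di *m E *m B) *m E^T).
  move: (Di *m E *m B *m E^T) hX => X hX.
  apply/matrixP => v w; rewrite hA mul_diag_mx !mxE hX.
  rewrite mulrBr mulrA mulfV // mul1r mulrC.
  by case: (v == w).
rewrite eA det_mulmx sylvester det_diag.
under eq_bigr => v _ do rewrite mxE.
congr (_ * \det (1%:M - _)).
rewrite !mulmxA; congr (_ *m B).
apply/matrixP => i j; rewrite -mulmxA mxE.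
under eq_bigr => v _ do rewrite mul_diag_mx !mxE.
rewrite !mxE mulr_suml.
case: (eqVneq i j) => [<-|hij].
  rewrite mulr1n; apply: eq_bigr => v _.
  by case: eqP => [->|_]; rewrite ?mul0r ?mulr0 // !mul1r mulr1.
rewrite mulr0n; apply: big1 => v _.
by case: eqP => [hv|_]; rewrite ?mul0r // mul1r; case: eqP => [hv'|]; rewrite ?mulr0 //; move: hij; rewrite -hv -hv' eqxx.
Qed.
End DetStruct.

Lemma sum_ind (R : nzRingType) (I : finType) (a : I) (F : I -> R) :
  \sum_j ((j == a)%:R * F j) = F a.
Proof.
rewrite (bigD1 a) //= eqxx mul1r big1 ?addr0 // => j /negbTE ->; by rewrite mul0r.
Qed.

Lemma det_arrow (R : fieldType) K (q h cc bt : 'I_K.+1 -> R) (B : 'M[R]_K.+1)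
 (hB : forall i j, B i j = if i == j then cc i else if i == ord0 then bt j
                           else if j == ord0 then bt i else 0)
 (hbt0 : bt ord0 = 0) (hh : forall i, h i = 1 - q i * cc i) (hh0 : forall i, h i != 0) :
 \det (1%:M - diag_mx (\row_i q i) *m B) =
   (\prod_i h i) * (1 - (\sum_i bt i * (q i * bt i / h i)) * (q ord0 / h ord0)).
Proof.
pose H : 'M[R]_K.+1 := diag_mx (\row_i h i).
pose X2 : 'M[R]_(K.+1, 2) := \matrix_(i, l) (if val l == 0%N then (i == ord0)%:R * (q ord0 / h ord0)
                                             else q i * bt i / h i).
pose Y2 : 'M[R]_(2, K.+1) := \matrix_(l, j) (if val l == 0%N then bt j else (j == ord0)%:R).
have eK : 1%:M - diag_mx (\row_i q i) *m B = H *m (1%:M - X2 *m Y2).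
  apply/matrixP => i j; rewrite /H !mul_diag_mx !mxE !big_ord_recl big_ord0 !mxE /= addr0 hB.
  have hhi := hh0 i; have hh00 := hh0 ord0.
  case: (eqVneq i j) => [<-|hij].
    rewrite hh; case: (eqVneq i ord0) => [->|hi0]; rewrite ?hbt0 /=.
      by rewrite !mulr0 !mul0r addr0 subr0 mulr1.
    by rewrite !mul0r mulr0 addr0 subr0 mulr1.
  rewrite /=; case: (eqVneq i ord0) => [hi0|hi0].
    have hj0 : j != ord0 by rewrite -hi0 eq_sym.
    rewrite (negbTE hj0) hi0 /= mulr0 mul1r add0r add0r; field; done.
  case: (eqVneq j ord0) => [hj0|hj0] /=.
    by rewrite !mul0r mulr1 !add0r; field.
  by rewrite !mul0r !mulr0 !addr0 subr0 mulr0.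
rewrite eK det_mulmx det_diag sylvester det2.
under eq_bigr => i _ do rewrite mxE.
congr (_ * _).
rewrite !mxE /=.
have s00 : \sum_j Y2 0 j * X2 j 0 = 0.
  under eq_bigr => j _ do rewrite !mxE /= mulrCA.
  by rewrite sum_ind hbt0 mul0r.
have s11 : \sum_j Y2 1 j * X2 j 1 = 0.
  under eq_bigr => j _ do rewrite !mxE /=.
  by rewrite sum_ind hbt0 mulr0 mul0r.
have s01 : \sum_j Y2 0 j * X2 j 1 = \sum_j bt j * (q j * bt j / h j).
  by apply: eq_bigr => j _; rewrite !mxE /=.
have s10 : \sum_j Y2 1 j * X2 j 0 = q ord0 / h ord0.
  under eq_bigr => j _ do rewrite !mxE /= mulrA -natrM mulnb andbb.
  by rewrite sum_ind.
rewrite s00 s11 s01 s10; ring.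
Qed.

Lemma final_alg (R : fieldType) k (x : R) (c e bb w : nat -> R) (p : nat -> nat)
 (hp : forall i, (i < k.+1)%N -> (1 <= p i)%N)
 (he : forall i, e i = (p i - 1)%:R * c i)
 (hbb : forall i, bb i ^+ 2 = w i)
 (hy : forall i, (i < k.+1)%N -> x + c i != 0)
 (ha : forall i, (i < k.+1)%N -> x - e i != 0) :
 (\prod_(i < k.+1) (x + c i) ^+ p i) *
 ((\prod_(i < k.+1) (1 - (p i)%:R / (x + c i) * c i)) *
  (1 - (\sum_(i < k.+1) (if i == ord0 then 0 else bb i) *
          ((p i)%:R / (x + c i) * (if i == ord0 then 0 else bb i) / (1 - (p i)%:R / (x + c i) * c i)))
     * ((p 0%N)%:R / (x + c 0%N) / (1 - (p 0%N)%:R / (x + c 0%N) * c 0%N)))) =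
 (\prod_(i < k.+1) (x + c i) ^+ (p i - 1)) *
 (\prod_(i < k.+1) (x - e i) -
  \sum_(1 <= j < k.+1) (p 0%N * p j)%:R * w j * \prod_(1 <= i < k.+1 | i != j) (x - e i)).
Proof.
have hh : forall i, (i < k.+1)%N -> 1 - (p i)%:R / (x + c i) * c i = (x - e i) / (x + c i).
  move=> i hi; rewrite he natrB ?hp //; have := hy i hi; move=> hyi; field.
  done.
have hh0 := hh 0%N isT.
rewrite hh0.
under [X in _ * (X * _)]eq_bigr => i _ do rewrite (hh i (ltn_ord i)).
under [X in _ * (_ * (1 - X * _))]eq_bigr => i _ do rewrite (hh i (ltn_ord i)).
rewrite mulrA -big_split /=.
rewrite (eq_bigr (fun i : 'I_k.+1 => (x + c i) ^+ (p i - 1) * (x - e i))); last first.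
  move=> i _; have hi := hp i (ltn_ord i); have hyi := hy i (ltn_ord i).
  rewrite -{1}(subnK hi) exprD expr1; field; done.
rewrite big_split /= -[LHS]mulrA; congr (_ * _).
rewrite !big_ord_recl /=.
rewrite (big_add1 _ _ 0 k.+1 xpredT) big_mkord /=.
under [X in _ = _ - X]eq_bigr => j _ do rewrite (big_add1 _ _ 0 k.+1) big_mkord /=.
have hb : forall i, bump 0 i = i.+1 by [].
rewrite !mul0r add0r.
under eq_bigr => i _ do rewrite hb.
have key : forall j : 'I_k, \prod_(i < k) (x - e i.+1) =
    (x - e j.+1) * \prod_(i < k | i.+1 != j.+1) (x - e i.+1).
  by move=> j; rewrite (bigD1 j) //=; congr (_ * _); apply: eq_bigl => i; rewrite eqSS.
rewrite mulrBr mulr1; congr (_ - _).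
rewrite mulr_suml mulr_sumr; apply: eq_bigr => j _.
rewrite [in LHS](key j) -hbb.
have ha0 := ha 0%N isT; have hy0 := hy 0%N isT.
have haj := ha j.+1 (ltn_ord j); have hyj := hy j.+1 (ltn_ord j).
rewrite natrM !hb; field; by rewrite ha0 hy0 haj hyj.
Qed.


Theorem corollary3p5 (R : realType) (k : nat) (n : nat -> nat) :
  (2 <= k)%N -> (forall i, (i < k)%N -> (1 <= n i)%N) ->
  let N := (\sum_(i < k) n i)%N in
  let d := fun i : nat => if i == 0%N then (N - 1)%N else (n 0%N + n i - 1)%N in
  let s2 : R := Num.sqrt 2 in
  char_poly (sombor_mx R (@gjoin_adj k (@star_adj k) (fun i : 'I_k => 'I_(n i))
                                   (fun i => @complete_adj (n i)))) =
  (\prod_(i < k) ('X + (s2 * (d i)%:R)%:P) ^+ (n i - 1)) *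
  (\prod_(i < k) ('X - ((n i - 1)%:R * s2 * (d i)%:R)%:P)
   - \sum_(1 <= j < k)
       ((n 0%N * n j * (d 0%N ^ 2 + d j ^ 2))%:R)%:P *
       \prod_(1 <= i < k | i != j) ('X - ((n i - 1)%:R * s2 * (d i)%:R)%:P)).
Proof.
move: k; case=> [//|k] hk hn N d s2.
set S := sombor_mx _ _.
pose T := {i : 'I_k.+1 & 'I_(n i)}.
pose t (v : 'I_#|{: T}|) : 'I_k.+1 := tag (enum_val v).
have hdeg : forall y : T, gdeg (@gjoin_adj k.+1 (@star_adj k.+1) (fun i : 'I_k.+1 => 'I_(n i))
          (fun i => @complete_adj (n i))) y = d (tag y).
  by move=> y; rewrite deg_gjoin.
have hS : forall v w, S v w = if v == w then 0 else if t v == t w then s2 * (d (t v))%:R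
   else if star_adj (t v) (t w) then Num.sqrt (((d (t v))^2)%:R + ((d (t w))^2)%:R) else 0.
  move=> v w; rewrite /S /sombor_mx mxE !hdeg /gjoin_adj -/(t v) -/(t w).
  have hvw : (v == w) = (enum_val v == enum_val w) by rewrite (inj_eq enum_val_inj).
  rewrite hvw -tag_eqE /tag_eq /= -/(t v) -/(t w).
  case: (eqVneq (t v) (t w)) => htw; last by [].
  rewrite /complete_adj /=.
  case: eqP => //= _.
  rewrite -htw -mulr2n -[_ *+ 2]mulr_natr natrX sqrtrM ?exprn_ge0 ?ler0n // sqrtr_sqr ger0_norm ?ler0n // mulrC.
  done.
pose c (i : nat) : R := s2 * (d i)%:R.
pose e (i : nat) : R := (n i - 1)%:R * s2 * (d i)%:R.
pose bb (j : nat) : R := Num.sqrt ((d 0%N ^ 2)%:R + (d j ^ 2)%:R).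
pose w (j : nat) : R := ((d 0%N ^ 2 + d j ^ 2)%N)%:R.
have hs2 : 0 <= s2 by apply: sqrtr_ge0.
have hc0 : forall i, 0 <= c i by move=> i; rewrite /c mulr_ge0.
have he0 : forall i, 0 <= e i by move=> i; rewrite /e !mulr_ge0.
pose M0 : R := 1 + \sum_(i < k.+1) e i.
apply: (@poly_eq_large _ _ _ M0) => x hx.
have hxe : forall i, (i < k.+1)%N -> e i < x.
  move=> i hi; apply: (lt_le_trans _ hx); rewrite /M0 (bigD1 (Ordinal hi)) //=.
  set s := (\sum_(_ < _ | _) _); have : 0 <= s by apply: sumr_ge0.
  lra.
have hx0 : 0 < x by apply: (le_lt_trans (he0 0%N)); apply: hxe.
have hy : forall i, (i < k.+1)%N -> x + c i != 0.
  by move=> i _; rewrite gt_eqF // ltr_wpDr.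
have ha : forall i, (i < k.+1)%N -> x - e i != 0.
  by move=> i hi; rewrite subr_eq0 gt_eqF // hxe.
rewrite horner_char_poly.
rewrite hornerM hornerD hornerN !horner_prod horner_sum.
under eq_bigr => i _ do rewrite horner_exp hornerD hornerX hornerC -/(c i).
under [X in _ * (X - _)]eq_bigr => i _ do rewrite hornerD hornerN hornerX hornerC -/(e i).
under [X in _ * (_ - X)]eq_bigr => j _ do rewrite hornerM hornerC horner_prod natrM -/(w j).
under [X in _ * (_ - X)]eq_bigr => j _ do under eq_bigr => i _ do rewrite hornerD hornerN hornerX hornerC -/(e i).
pose y (i : 'I_k.+1) : R := x + c i.
pose B : 'M[R]_k.+1 := \matrix_(i, j) (if i == j then c i else if star_adj i j
        then Num.sqrt ((d i ^ 2)%:R + (d j ^ 2)%:R) else 0).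
rewrite (@det_struct R _ _ t y B); last 2 first.
- by move=> i; apply: hy.
- move=> v u; rewrite mxE [(- S) v u]mxE hS mxE.
  case: (eqVneq v u) => [<-|hvw]; first by rewrite /= mulr1n mul1r subr0 /B mxE eqxx /y addrK.
  by rewrite /= mulr0n mul0r sub0r add0r /B mxE.
have hcnt : forall i : 'I_k.+1, \sum_v (t v == i)%:R = (n i)%:R :> R.
  move=> i; rewrite /t (big_enum_split _ _ _ _ _ (fun z : T => (tag z == i)%:R)) /=.
  under eq_bigr => j _ do rewrite sumr_const card_ord.
  rewrite (bigD1 i) //= eqxx big1 ?addr0 // => j /negbTE ->; by rewrite mul0rn.
have hprod : \prod_v y (t v) = \prod_i y i ^+ n i.
  rewrite /t (big_enum_split _ _ _ _ _ (fun z : T => y (tag z))) /=.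
  by under eq_bigr => j _ do rewrite prodr_const card_ord.
rewrite hprod.
have -> : \row_i ((\sum_v (t v == i)%:R) / y i) = \row_i ((n i)%:R / y i).
  by apply/rowP => i; rewrite !mxE hcnt.
have hee : forall i, e i = (n i - 1)%:R * c i by move=> i; rewrite /e /c mulrA.
rewrite (@det_arrow R k (fun i => (n i)%:R / y i) (fun i => 1 - (n i)%:R / y i * c i)
   (fun i => c i) (fun i => if i == ord0 then 0 else bb i) B); last first.
- move=> i; have hi := ltn_ord i; have hyi := hy i hi; have hai := ha i hi.
  have -> : 1 - (n i)%:R / y i * c i = (x - e i) / (x + c i).
    by rewrite /y hee natrB ?hn //; field.
  by rewrite mulf_neq0 // invr_neq0.
- by [].
- by [].
- move=> i j; rewrite /B mxE; case: eqVneq => // hij.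
  rewrite /star_adj hij /=; case: (eqVneq i ord0) => [hi0|hi0] /=.
    by rewrite hi0 eq_sym in hij *; rewrite (negbTE hij).
  have -> : (val i == 0%N) = false by apply/negbTE.
  case: (eqVneq j ord0) => [->|hj0] /=; first by rewrite /bb addrC.
  by have -> : (val j == 0%N) = false by apply/negbTE.
apply: final_alg => //.
by move=> i; rewrite /bb sqr_sqrtr ?addr_ge0 ?ler0n // /w natrD.
Qed.
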